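(* Let $\mathcal{X}\subset\mathbb{R}^d$ be compact, let $k$ be a positive definite kernel on $\mathcal{X}$ with $k(x,x)\le 1$ for all $x\in\mathcal{X}$, and let $f\in\mathcal{H}_k$. Assume the kernel matrices $\mathbf{K}_t$ of the query points are invertible and that all maximizers below exist. Let $x_1,\dots,x_T$ be generated by Algorithm 1: for $t=1,\dots,T$, $x_t\in\arg\max_{x\in\mathcal{X}}\, m_{t-1}(x)+\|f\|_{\mathcal{H}_k}\sigma_{t-1}(x)$, and $f(x_t)$ is observed. Fix any $\sigma>0$ and let $C_1=\frac{8}{\log(1+\sigma^{-2})}$. Then $$R_T\le \|f\|_{\mathcal{H}_k}\sqrt{T C_1\gamma_T},\qquad r_T\le \|f\|_{\mathcal{H}_k}\sqrt{\frac{C_1\gamma_T}{T}}.$$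
   Context: For query points $x_1,\dots,x_t$, $\mathbf{k}_t(x)=[k(x,x_1),\dots,k(x,x_t)]^T$, $\mathbf{K}_t=[k(x_i,x_j)]_{1\le i,j\le t}$, $\mathbf{f}_t=[f(x_1),\dots,f(x_t)]^T$, and (noise-free) $m_t(x)=\mathbf{k}_t(x)^T\mathbf{K}_t^{-1}\mathbf{f}_t$, $\sigma_t^2(x)=k(x,x)-\mathbf{k}_t(x)^T\mathbf{K}_t^{-1}\mathbf{k}_t(x)$, with $m_0\equiv 0$, $\sigma_0^2(x)=k(x,x)$. Let $x^*\in\arg\max_{x\in\mathcal{X}}f(x)$. Cumulative regret $R_T=\sum_{t=1}^T(f(x^* )-f(x_t))$; simple regret $r_T=f(x^* )-\max_{1\le t\le T}f(x_t)$. Maximum information gain: $\gamma_T=\max_{x_1,\dots,x_T\in\mathcal{X}}\frac12\log\det(\mathbf{I}_T+\sigma^{-2}\mathbf{K}_T)$. *)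

(* Defs.v *)
From Stdlib Require Import Reals Lra Lia Arith.
Open Scope R_scope.

Fixpoint sumR (n : nat) (f : nat -> R) : R :=
  match n with
  | O => 0
  | S m => sumR m f + f m
  end.

(** Points of R^d are represented as [nat -> R] vanishing at coordinates >= d. *)
Definition eucl_dist (d : nat) (u v : nat -> R) : R :=
  sqrt (sumR d (fun i => (u i - v i) ^ 2)).

Definition compact_Rd (d : nat) (Xs : (nat -> R) -> Prop) : Prop :=
  (forall v, Xs v -> forall i, (d <= i)%nat -> v i = 0) /\
  (forall u : nat -> (nat -> R), (forall n, Xs (u n)) ->
     exists phi : nat -> nat, (forall n, (phi n < phi (S n))%nat) /\
     exists l, Xs l /\ Un_cv (fun n => eucl_dist d (u (phi n)) l) 0).

Definition Xt (Xs : (nat -> R) -> Prop) : Type := {v : nat -> R | Xs v}.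

Definition pd_kernel {T : Type} (k : T -> T -> R) : Prop :=
  (forall x y, k x y = k y x) /\
  (forall (n : nat) (xs : nat -> T) (c : nat -> R),
     0 <= sumR n (fun i => sumR n (fun j => c i * c j * k (xs i) (xs j)))).

Record is_RKHS {T : Type} (k : T -> T -> R) (H : (T -> R) -> Prop)
    (ip : (T -> R) -> (T -> R) -> R) : Prop := {
  rk_zero : H (fun _ => 0);
  rk_add : forall f g, H f -> H g -> H (fun x => f x + g x);
  rk_scal : forall (a : R) f, H f -> H (fun x => a * f x);
  rk_sym : forall f g, H f -> H g -> ip f g = ip g f;
  rk_ip_add : forall f g h, H f -> H g -> H h ->
      ip (fun x => f x + g x) h = ip f h + ip g h;
  rk_ip_scal : forall (a : R) f g, H f -> H g -> ip (fun x => a * f x) g = a * ip f g;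
  rk_pos : forall f, H f -> 0 <= ip f f;
  rk_def : forall f, H f -> ip f f = 0 -> forall x, f x = 0;
  rk_kmem : forall x, H (fun y => k y x);
  rk_reprod : forall f x, H f -> f x = ip f (fun y => k y x);
  rk_complete : forall u : nat -> T -> R, (forall n, H (u n)) ->
      (forall eps, 0 < eps -> exists N, forall m n, (N <= m)%nat -> (N <= n)%nat ->
          sqrt (ip (fun x => u m x - u n x) (fun x => u m x - u n x)) < eps) ->
      exists g, H g /\
        Un_cv (fun n => sqrt (ip (fun x => u n x - g x) (fun x => u n x - g x))) 0
}.

Definition rnorm {T : Type} (ip : (T -> R) -> (T -> R) -> R) (f : T -> R) : R :=
  sqrt (ip f f).

(** Square matrices as [nat -> nat -> R] (indices < n). *)
Definition minor (A : nat -> nat -> R) (i j : nat) : nat -> nat -> R :=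
  fun r c => A (if (r <? i)%nat then r else S r) (if (c <? j)%nat then c else S c).

Fixpoint det (n : nat) (A : nat -> nat -> R) : R :=
  match n with
  | O => 1
  | S m => sumR (S m) (fun j => (-1) ^ j * A 0%nat j * det m (minor A 0 j))
  end.

Definition invm (n : nat) (A : nat -> nat -> R) : nat -> nat -> R :=
  fun i j => (-1) ^ (i + j) * det (Nat.pred n) (minor A j i) / det n A.

(** Query points x_1, x_2, ... are [x 1], [x 2], ...; K_t has entries
    k(x_{i+1}, x_{j+1}) for i, j < t. *)
Definition Kmat {T : Type} (k : T -> T -> R) (x : nat -> T) : nat -> nat -> R :=
  fun i j => k (x (S i)) (x (S j)).

Definition post_mean {T : Type} (k : T -> T -> R) (x : nat -> T) (f : T -> R)
    (t : nat) (y : T) : R :=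
  sumR t (fun i => sumR t (fun j =>
    k y (x (S i)) * invm t (Kmat k x) i j * f (x (S j)))).

Definition post_var {T : Type} (k : T -> T -> R) (x : nat -> T) (t : nat) (y : T) : R :=
  k y y - sumR t (fun i => sumR t (fun j =>
    k y (x (S i)) * invm t (Kmat k x) i j * k y (x (S j)))).

Definition post_sd {T : Type} (k : T -> T -> R) (x : nat -> T) (t : nat) (y : T) : R :=
  sqrt (post_var k x t y).

(** Set of values 1/2 log det(I_T + sigma^{-2} K_T) over all z_1..z_T in X;
    gamma_T is its least upper bound (= its maximum when attained). *)
Definition info_set {T : Type} (k : T -> T -> R) (sigma : R) (n : nat) : R -> Prop :=
  fun g => exists z : nat -> T,
    g = / 2 * ln (det n (fun i j => (if Nat.eqb i j then 1 else 0) + / sigma ^ 2 * k (z i) (z j))).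

Definition cum_regret {T : Type} (f : T -> R) (xstar : T) (x : nat -> T) (n : nat) : R :=
  sumR n (fun i => f xstar - f (x (S i))).

Fixpoint max_val {T : Type} (f : T -> R) (x : nat -> T) (n : nat) : R :=
  match n with
  | O => f (x 1%nat)
  | S m => Rmax (max_val f x m) (f (x (S m)))
  end.

Definition simple_regret {T : Type} (f : T -> R) (xstar : T) (x : nat -> T) (n : nat) : R :=
  f xstar - max_val f x n.

(* Main.v *)
Require Import Defs.
From Stdlib Require Import Reals Lra Lia.
From mathcomp Require Import all_boot all_order all_algebra.
From mathcomp Require Import Rstruct.
From Stdlib Require Import FunctionalExtensionality.
Import Order.TTheory GRing.Theory Num.Theory.
Set Implicit Arguments. Unset Strict Implicit. Unset Printing Implicit Defensive.
Local Open Scope ring_scope.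

Section Mx.
Variable R : realFieldType.

Lemma trZ m p (a : R) (A : 'M[R]_(m,p)) : (a *: A)^T = a *: A^T.
Proof. by apply/matrixP=> i j; rewrite !mxE. Qed.
Lemma trD m p (A B : 'M[R]_(m,p)) : (A + B)^T = A^T + B^T.
Proof. by apply/matrixP=> i j; rewrite !mxE. Qed.

Lemma schur_det n (M : 'M[R]_n) (b : 'cV_n) (r : 'rV_n) (d : 'M_1) :
  M \in unitmx -> \det (block_mx M b r d) = \det M * \det (d - r *m invmx M *m b).
Proof.
move=> uM.
have -> : block_mx M b r d = block_mx 1%:M 0 (r *m invmx M) 1%:M *m
     block_mx M b 0 (d - r *m invmx M *m b).
  rewrite mulmx_block !mul1mx !mul0mx !addr0 -mulmxA mulVmx // mulmx1.
  by rewrite addrC subrK.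
by rewrite det_mulmx det_lblock det_ublock !det1 !mul1r.
Qed.

Definition psd {n} (P : 'M[R]_n) := forall u : 'cV_n, 0 <= (u^T *m P *m u) 0 0.

Lemma ww_ge0 n (w : 'cV[R]_n) : 0 <= (w^T *m w) 0 0.
Proof.
rewrite mxE; apply: sumr_ge0 => i _; rewrite mxE -expr2; exact: sqr_ge0.
Qed.

Lemma quad_ineq n (P : 'M[R]_n) (v : 'cV_n) (c : R) :
  P^T = P -> P \in unitmx -> psd P -> 0 < c -> (1%:M + c *: P) \in unitmx ->
  c * (v^T *m invmx (1%:M + c *: P) *m v) 0 0 <= (v^T *m invmx P *m v) 0 0.
Proof.
move=> sP uP pP c0 uM.
have [M hM] : exists M, M = 1%:M + c *: P by eexists.
rewrite -hM in uM *.
have [w hw] : exists w, w = invmx M *m v by eexists.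
have hv : v = w + c *: (P *m w).
  rewrite -[w in w + _]mul1mx scalemxAl -mulmxDl -hM hw mulmxA mulmxV //.
  by rewrite mul1mx.
have e1 : v^T *m invmx M *m v = w^T *m w + c *: (w^T *m P *m w).
  rewrite -mulmxA -hw hv.
  rewrite trD trZ trmx_mul sP.
  by rewrite mulmxDl -scalemxAl.
clear hw.
have hz : w^T *m invmx P *m w = (invmx P *m w)^T *m P *m (invmx P *m w).
  rewrite trmx_mul trmx_inv sP -[w^T *m invmx P *m P]mulmxA mulVmx // mulmx1.
  by rewrite mulmxA.
have e2 : v^T *m invmx P *m v = w^T *m invmx P *m w
     + (c *: (w^T *m w)) *+ 2 + (c ^+ 2) *: (w^T *m P *m w).
  rewrite hv.
  rewrite linearD linearZ /=.
  rewrite -[_ *m invmx P *m (P *m w)]mulmxA (mulmxA (invmx P)) mulVmx // mul1mx.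
  rewrite trD trZ trmx_mul sP.
  rewrite !mulmxDl -!scalemxAl.
  rewrite -[w^T *m P *m invmx P]mulmxA mulmxV // mulmx1.
  by rewrite scalerDr scalerA -expr2 mulr2n !addrA.
rewrite e1 e2.
have h1 := pP (invmx P *m w). rewrite -hz in h1.
have h2 := ww_ge0 w.
have h3 := pP w.
move: h1 h2 h3.
move: (w^T *m w) (w^T *m P *m w) (w^T *m invmx P *m w) => A B C h1 h2 h3.
rewrite !mxE mulrDr.
have h4 : 0 <= c * A 0 0 by apply: mulr_ge0 => //; exact: ltW.
rewrite mulrA -expr2 lerD2r.
apply: (le_trans (_ : _ <= c * A 0 0 + c * A 0 0)); first by rewrite lerDl.
by rewrite lerDr.
Qed.

Lemma inv_psd n (P : 'M[R]_n) : P^T = P -> P \in unitmx -> psd P -> psd (invmx P).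
Proof.
move=> sP uP pP w.
have -> : w^T *m invmx P *m w = (invmx P *m w)^T *m P *m (invmx P *m w).
  rewrite trmx_mul trmx_inv sP -[w^T *m invmx P *m P]mulmxA mulVmx // mulmx1.
  by rewrite mulmxA.
exact: pP.
Qed.

Lemma block_step n (P : 'M[R]_n) (v : 'cV_n) (a c : R) :
  P^T = P -> P \in unitmx -> psd P -> 0 < c -> 0 < \det (1%:M + c *: P) ->
  \det (1%:M + c *: P) * (1 + c * (a - (v^T *m invmx P *m v) 0 0)) <=
  \det (block_mx (1%:M + c *: P) (c *: v) (c *: v^T) (1 + c * a)%:M).
Proof.
move=> sP uP pP c0 d0.
have uM : (1%:M + c *: P) \in unitmx by rewrite unitmxE unitfE gt_eqF.
rewrite schur_det // det_mx11.
have q := quad_ineq v sP uP pP c0 uM.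
move: q d0.
have -> : (c *: v^T *m invmx (1%:M + c *: P) *m (c *: v)) =
   c ^+ 2 *: (v^T *m invmx (1%:M + c *: P) *m v).
  by rewrite -!scalemxAl -scalemxAr scalerA -expr2.
move: (v^T *m invmx (1%:M + c *: P) *m v) (v^T *m invmx P *m v) => A B.
move: (\det (1%:M + c *: P)) => D q d0.
rewrite !mxE /= mulr1n.
apply: ler_wpM2l; first exact: ltW.
rewrite mulrBr addrA; apply: lerB => //.
rewrite expr2 -mulrA.
by apply: ler_wpM2l => //; exact: ltW.
Qed.

End Mx.

Local Open Scope ring_scope.

Lemma sumR_big n (f : nat -> R) : sumR n f = (\sum_(i < n) f i)%R.
Proof. elim: n => [|n IH] /=; first by rewrite big_ord0. by rewrite IH big_ord_recr. Qed.

Definition mx n (A : nat -> nat -> R) : 'M[R]_n := \matrix_(i < n, j < n) A i j.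

Lemma ltb_ltn (a b : nat) : Nat.ltb a b = (a < b)%N.
Proof.
case: (Nat.ltb_spec a b) => h.
  by apply/esym/ssrnat.ltP.
apply/esym/negbTE/negP => /ssrnat.ltP; lia.
Qed.

Lemma minor_mx m (A : nat -> nat -> R) (i j : 'I_m.+1) :
  row' i (col' j (mx m.+1 A)) = mx m (minor A i j).
Proof.
apply/matrixP => r c; rewrite !mxE /minor /= /bump !ltb_ltn.
by case: (ltnP r i) => hr; case: (ltnP c j) => hc; rewrite ?add0n ?add1n.
Qed.

Lemma m1pow j : pow (IZR (Zneg xH)) j = ((-1) ^+ j)%R.
Proof. by rewrite RpowE. Qed.

Lemma det_bridge n (A : nat -> nat -> R) : det n A = \det (mx n A).
Proof.
elim: n A => [|m IH] A; first by rewrite /= det_mx00.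
have -> : det m.+1 A = sumR m.+1 (fun j => pow (IZR (Zneg xH)) j * A 0%N j * det m (minor A 0 j)) by [].
rewrite sumR_big (expand_det_row _ ord0); apply: eq_bigr => j _.
rewrite IH -(minor_mx A ord0 j) /cofactor !mxE m1pow add0n.
by rewrite [RHS]mulrCA mulrA.
Qed.

Lemma det_unit n (A : nat -> nat -> R) : det n A <> 0%R -> mx n A \in unitmx.
Proof. by move=> hd; rewrite unitmxE unitfE -det_bridge; apply/eqP. Qed.

Lemma invm_bridge n (A : nat -> nat -> R) : det n A <> 0%R ->
  mx n (invm n A) = invmx (mx n A).
Proof.
case: n => [|m] hd; first by apply/matrixP => [[]].
have u := det_unit hd.
rewrite /invmx u; apply/matrixP => i j; rewrite !mxE /invm.
rewrite (det_bridge m) -(minor_mx A j i) m1pow /cofactor addnC -det_bridge.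
by rewrite RdivE mulrC.
Qed.

Lemma dsum_quad n (p q : nat -> R) (A : nat -> nat -> R) :
  sumR n (fun i => sumR n (fun j => p i * A i j * q j)) =
  ((\col_(i < n) p i)^T *m mx n A *m \col_(j < n) q j) 0 0.
Proof.
rewrite sumR_big !mxE.
under eq_bigr do rewrite sumR_big.
under [RHS]eq_bigr => j _ do rewrite !mxE big_distrl /=.
rewrite exchange_big /=; apply: eq_bigr => i _; apply: eq_bigr => j _.
by rewrite !mxE.
Qed.


Lemma sumR_ext n (f g : nat -> R) : (forall i, (i < n)%N -> f i = g i) -> sumR n f = sumR n g.
Proof.
elim: n => [|n IH] h //=; rewrite IH; first by rewrite h.
by move=> i hi; apply: h; apply: ltnW.
Qed.

Lemma sumR_swap n (p q : nat -> R) (A : nat -> nat -> R) :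
  sumR n (fun i => sumR n (fun j => p i * A i j * q j)) =
  sumR n (fun j => sumR n (fun i => p i * A i j) * q j).
Proof.
rewrite !sumR_big; under eq_bigr do rewrite sumR_big.
under [RHS]eq_bigr do rewrite sumR_big big_distrl.
by rewrite exchange_big.
Qed.

Arguments rk_zero {T k H ip}.
Arguments rk_add {T k H ip} _ {f g}.
Arguments rk_scal {T k H ip} _ a {f}.
Arguments rk_sym {T k H ip} _ {f g}.
Arguments rk_ip_add {T k H ip} _ {f g h}.
Arguments rk_ip_scal {T k H ip} _ a {f g}.
Arguments rk_pos {T k H ip} _ {f}.
Arguments rk_def {T k H ip} _ {f}.
Arguments rk_kmem {T k H ip} _ x.
Arguments rk_reprod {T k H ip} _ {f} x.

Section RK.
Local Open Scope R_scope.
Variables (T : Type) (k : T -> T -> R) (H : (T -> R) -> Prop)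
  (ip : (T -> R) -> (T -> R) -> R).
Hypothesis HH : is_RKHS k H ip.

Lemma ip0l g : H g -> ip (fun _ => 0) g = 0.
Proof.
move=> Hg; have := rk_ip_scal HH 0 Hg Hg.
have -> : (fun x => 0 * g x) = (fun _ => 0) by apply: functional_extensionality => z; ring.
by move=> ->; ring.
Qed.

Lemma H_sum n (c : nat -> R) (h : nat -> T -> R) : (forall j, H (h j)) ->
  H (fun z => sumR n (fun j => c j * h j z)).
Proof.
move=> Hh; elim: n => [|n IH] /=; first exact: rk_zero HH.
exact: (rk_add HH IH (rk_scal HH (c n) (Hh n))).
Qed.

Lemma ip_sum n (c : nat -> R) (h : nat -> T -> R) g : (forall j, H (h j)) -> H g ->
  ip (fun z => sumR n (fun j => c j * h j z)) g = sumR n (fun j => c j * ip (h j) g).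
Proof.
move=> Hh Hg; elim: n => [|n IH] /=; first exact: ip0l.
rewrite (rk_ip_add HH (H_sum n c Hh) (rk_scal HH (c n) (Hh n)) Hg).
by rewrite IH (rk_ip_scal HH (c n) (Hh n) Hg).
Qed.

Lemma ip_comb u v a b : H u -> H v ->
  ip (fun z => u z + a * v z) (fun z => u z + b * v z) =
  ip u u + (a + b) * ip u v + a * b * ip v v.
Proof.
move=> Hu Hv.
have Hav : forall a, H (fun z => a * v z) by move=> c; exact (rk_scal HH c Hv).
have Huv : forall a, H (fun z => u z + a * v z) by move=> c; exact (rk_add HH Hu (Hav c)).
rewrite (rk_ip_add HH Hu (Hav a) (Huv b)) (rk_ip_scal HH a Hv (Huv b)).
rewrite (rk_sym HH Hu (Huv b)) (rk_sym HH Hv (Huv b)).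
rewrite (rk_ip_add HH Hu (Hav b) Hu) (rk_ip_scal HH b Hv Hu).
rewrite (rk_ip_add HH Hu (Hav b) Hv) (rk_ip_scal HH b Hv Hv).
rewrite (rk_sym HH Hv Hu); ring.
Qed.

Lemma cauchy_schwarz u v : H u -> H v -> (ip u v) ^ 2 <= ip u u * ip v v.
Proof.
move=> Hu Hv.
have pu := rk_pos HH Hu; have pv := rk_pos HH Hv.
case: (Rle_lt_or_eq_dec 0 (ip v v) pv) => hv.
  set lam := - (ip u v) / ip v v.
  have h := rk_pos HH (rk_add HH Hu (rk_scal HH lam Hv)).
  have e := ip_comb lam lam Hu Hv.
  have e2 : ip v v * (ip u u + (lam + lam) * ip u v + lam * lam * ip v v)
     = ip u u * ip v v - (ip u v) ^ 2 by rewrite /lam; field; lra.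
  have : 0 <= ip v v * (ip u u + (lam + lam) * ip u v + lam * lam * ip v v).
    apply: Rmult_le_pos => //; rewrite -e //.
  rewrite e2; lra.
have v0 : (fun z => v z) = (fun _ => 0).
  by apply: functional_extensionality => z; apply: (rk_def HH Hv); rewrite hv.
have : ip u v = 0.
  rewrite (rk_sym HH Hu Hv).
  have -> : v = (fun _ => 0) by rewrite -v0.
  exact: ip0l.
move=> ->; rewrite -hv; lra.
Qed.

End RK.

Lemma Kmx_sym (T : Type) (k : T -> T -> R) (x : nat -> T) n :
  (forall a c, k a c = k c a) -> (mx n (Kmat k x))^T = mx n (Kmat k x).
Proof. by move=> hs; apply/matrixP => i j; rewrite !mxE /Kmat hs. Qed.

Lemma Kmx_psd (T : Type) (k : T -> T -> R) (x : nat -> T) n :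
  pd_kernel k -> psd (mx n (Kmat k x)).
Proof.
move=> [_ Hp] u; case: n u => [|m] u.
  by rewrite mxE big_ord0.
have := Hp m.+1 (fun i => x (S i)) (fun i => u (inord i) 0).
rewrite (@sumR_ext _ _ (fun i => sumR m.+1 (fun j =>
   u (inord i) 0 * Kmat k x i j * u (inord j) 0))); last first.
  move=> i _; apply: sumR_ext => j _; rewrite /Kmat.
  by rewrite -!RmultE; ring.
rewrite dsum_quad.
have -> : (\col_(i < m.+1) u (inord i) 0) = u.
  by apply/matrixP => i j; rewrite mxE inord_val (ord1 j).
by move/RleP.
Qed.

Lemma wb_facts (T : Type) (k : T -> T -> R) (x : nat -> T) n (b : nat -> R) :
  pd_kernel k -> det n (Kmat k x) <> 0%R ->
  let w := fun j => sumR n (fun i => b i * invm n (Kmat k x) i j) in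
  sumR n (fun j => w j * sumR n (fun l => w l * k (x (S j)) (x (S l)))) =
     sumR n (fun j => w j * b j) /\
  0 <= sumR n (fun j => w j * b j).
Proof.
move=> hk hd w.
have hs : forall a c, k a c = k c a by case: hk.
set K := mx n (Kmat k x).
set Q := invmx K.
have sK : K^T = K by exact: Kmx_sym.
have uK : K \in unitmx by exact: det_unit.
have sQ : Q^T = Q by rewrite /Q trmx_inv sK.
set bc := \col_(i < n) b i.
have hw : \col_(j < n) w j = Q *m bc.
  apply/matrixP => j z; rewrite (ord1 z) !mxE /w sumR_big.
  apply: eq_bigr => i _.
  have := congr1 (fun M : 'M_n => M i j) (invm_bridge hd).
  rewrite !mxE => ->.
  by rewrite -/K -/Q -[Q in RHS]sQ mxE mulrC.
have e1 : sumR n (fun j => w j * b j) = (bc^T *m Q *m bc) 0 0.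
  by rewrite /Q /K -(invm_bridge hd) -dsum_quad sumR_swap.
have e2 : sumR n (fun j => w j * sumR n (fun l => w l * k (x (S j)) (x (S l)))) =
    ((\col_(j < n) w j)^T *m K *m (\col_(j < n) w j)) 0 0.
  rewrite -dsum_quad; apply: sumR_ext => j _.
  rewrite !sumR_big mulr_sumr; apply: eq_bigr => l _.
  by rewrite /Kmat [w l * _]mulrC mulrA.
rewrite e1 e2 hw trmx_mul sQ.
split.
  by rewrite -[bc^T *m Q *m K]mulmxA mulVmx // mulmx1 mulmxA.
have := inv_psd sK uK (@Kmx_psd _ _ x n hk) bc.
by rewrite /psd /Q /K.
Qed.

Section Conf.
Local Open Scope R_scope.

Lemma conf (T : Type) (k : T -> T -> R) (H : (T -> R) -> Prop)
  (ip : (T -> R) -> (T -> R) -> R) (HH : is_RKHS k H ip) (hk : pd_kernel k)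
  (x : nat -> T) (f : T -> R) n y :
  H f -> det n (Kmat k x) <> 0 ->
  0 <= post_var k x n y /\ post_var k x n y <= k y y /\
  Rabs (f y - post_mean k x f n y) <= rnorm ip f * post_sd k x n y.
Proof.
move=> Hf hd.
pose b := fun i => k y (x (S i)).
pose w := fun j => sumR n (fun i => b i * invm n (Kmat k x) i j).
have [eqq ge] := @wb_facts T k x n b hk hd.
have eqq2 : sumR n (fun j => w j * sumR n (fun l => w l * k (x (S j)) (x (S l)))) =
  sumR n (fun j => w j * b j) := eqq.
have ge2 : 0 <= sumR n (fun j => w j * b j) by move/RleP: ge.
clear eqq ge.
have pv : post_var k x n y = k y y - sumR n (fun j => w j * b j).
  by rewrite /post_var sumR_swap.
have pm : post_mean k x f n y = sumR n (fun j => w j * f (x (S j))).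
  by rewrite /post_mean sumR_swap.
pose h := fun j => fun z => k z (x (S j)).
have Hh : forall j, H (h j) by move=> j; exact (rk_kmem HH (x (S j))).
pose Sf := fun z => sumR n (fun j => w j * h j z).
have HS : H Sf by exact (H_sum HH n w Hh).
have Hy : H (fun z => k z y) by exact (rk_kmem HH y).
pose g := fun z => k z y + (-1) * Sf z.
have Hg : H g by exact (rk_add HH Hy (rk_scal HH (-1) HS)).
have ipfg : ip f g = f y - post_mean k x f n y.
  rewrite (rk_sym HH Hf Hg) /g (rk_ip_add HH Hy (rk_scal HH (-1) HS) Hf).
  rewrite (rk_ip_scal HH (-1) HS Hf) /Sf (ip_sum HH n w Hh Hf).
  rewrite (rk_sym HH Hy Hf) -(rk_reprod HH y Hf) pm.
  rewrite (@sumR_ext n _ (fun j => w j * f (x (S j)))); first ring.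
  by move=> j _; rewrite (rk_sym HH (Hh j) Hf) -(rk_reprod HH (x (S j)) Hf).
have ipgg : ip g g = post_var k x n y.
  rewrite /g (ip_comb HH (-1) (-1) Hy HS).
  have e1 : ip (fun z => k z y) (fun z => k z y) = k y y.
    by rewrite -(rk_reprod HH y Hy).
  have e2 : ip (fun z => k z y) Sf = sumR n (fun j => w j * b j).
    rewrite (rk_sym HH Hy HS) /Sf (ip_sum HH n w Hh Hy).
    apply: sumR_ext => j _.
    by rewrite -(rk_reprod HH y (Hh j)).
  have e3 : ip Sf Sf = sumR n (fun j => w j * sumR n (fun l => w l * k (x (S j)) (x (S l)))).
    rewrite {1}/Sf (ip_sum HH n w Hh HS).
    apply: sumR_ext => j _.
    rewrite (rk_sym HH (Hh j) HS) /Sf (ip_sum HH n w Hh (Hh j)).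
    congr (_ * _); apply: sumR_ext => l _.
    by rewrite -(rk_reprod HH (x (S j)) (Hh l)).
  rewrite e1 e2 e3 eqq2 pv; ring.
have pos : 0 <= post_var k x n y by rewrite -ipgg; exact (rk_pos HH Hg).
split => //; split; first by rewrite pv; lra.
have cs := cauchy_schwarz HH Hf Hg.
rewrite ipfg ipgg in cs.
rewrite /rnorm /post_sd -sqrt_mult; [|exact (rk_pos HH Hf)|exact pos].
rewrite -sqrt_Rsqr_abs; apply: sqrt_le_1_alt.
by rewrite /Rsqr; move: cs; rewrite /pow Rmult_1_r.
Qed.

End Conf.

Definition IcK (T : Type) (k : T -> T -> R) (x : nat -> T) (c : R) :=
  fun i j => ((if Nat.eqb i j then 1 else 0) + c * k (x (S i)) (x (S j))).

Lemma eqb_eqn (a b : nat) : Nat.eqb a b = (a == b).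
Proof. by case: (Nat.eqb_spec a b) => h; apply/esym; [apply/eqP | apply/eqP]. Qed.

Lemma IcK_mx (T : Type) (k : T -> T -> R) (x : nat -> T) (c : R) n :
  mx n (IcK k x c) = 1%:M + c *: mx n (Kmat k x).
Proof.
apply/matrixP => i j; rewrite !mxE /IcK eqb_eqn.
have -> : ((i : nat) == j) = (i == j) by [].
by case: (i == j).
Qed.

Lemma IcK_block (T : Type) (k : T -> T -> R) (x : nat -> T) (c : R) n :
  (forall a b, k a b = k b a) ->
  mx (n + 1) (IcK k x c) =
  block_mx (1%:M + c *: mx n (Kmat k x)) (c *: \col_(i < n) k (x (S n)) (x (S i)))
    (c *: (\col_(i < n) k (x (S n)) (x (S i)))^T) (1 + c * k (x (S n)) (x (S n)))%:M.
Proof.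
move=> hs.
apply/matrixP => i j; rewrite !mxE.
case: (splitP i) => i' hi; rewrite !mxE; case: (splitP j) => j' hj;
  rewrite !mxE /IcK hi hj eqb_eqn.
- have -> : ((i' : nat) == j') = (i' == j') by [].
  by case: (i' == j').
- by rewrite (ord1 j') addn0 (ltn_eqF (ltn_ord i')) add0r hs.
- by rewrite (ord1 i') addn0 (gtn_eqF (ltn_ord j')) add0r.
- by rewrite (ord1 i') (ord1 j') addn0 eqxx.
Qed.

Lemma det_step (T : Type) (k : T -> T -> R) (x : nat -> T) (hk : pd_kernel k) c n :
  0 < c -> det n (Kmat k x) <> 0%R -> 0 < det n (IcK k x c) ->
  det n (IcK k x c) * (1 + c * post_var k x n (x (S n))) <= det (n + 1) (IcK k x c).
Proof.
move=> c0 hd hD.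
have hs : forall a b, k a b = k b a by case: hk.
rewrite !det_bridge IcK_block // IcK_mx.
rewrite det_bridge IcK_mx in hD.
have pv : post_var k x n (x (S n)) = k (x (S n)) (x (S n)) -
   ((\col_(i < n) k (x (S n)) (x (S i)))^T *m invmx (mx n (Kmat k x)) *m
     (\col_(i < n) k (x (S n)) (x (S i)))) 0 0.
  rewrite /post_var (dsum_quad n (fun i => k (x (S n)) (x (S i))) (fun i => k (x (S n)) (x (S i)))
     (invm n (Kmat k x))).
  by rewrite invm_bridge.
rewrite pv.
apply: block_step => //.
- exact: Kmx_sym.
- exact: det_unit.
- exact: Kmx_psd.
Qed.

Section Fin.
Local Open Scope R_scope.
Lemma ln_tangent z m : 0 < z -> 0 < m -> ln z <= ln m + (z - m) / m.
Proof.
intros hz hm.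
assert (h := exp_ineq1_le (ln (z / m))).
have zm : 0 < z / m by apply Rdiv_lt_0_compat; lra.
have im : 0 < / m by apply Rinv_0_lt_compat; lra.
rewrite exp_ln // /Rdiv ln_mult // ln_Rinv // in h.
assert (e : (z - m) / m = z * / m - 1) by (field; lra).
rewrite e; lra.
Qed.

Lemma ln_concave s c : 0 <= s <= 1 -> 0 < c -> s * ln (1 + c) <= ln (1 + c * s).
Proof.
intros hs hc.
assert (hm : 0 < 1 + c * s) by nra.
assert (h1 := @ln_tangent 1 (1 + c * s) ltac:(lra) hm).
assert (h2 := @ln_tangent (1 + c) (1 + c * s) ltac:(lra) hm).
rewrite ln_1 in h1.
assert (h1' := Rmult_le_compat_l (1 - s) _ _ ltac:(lra) h1).
assert (h2' := Rmult_le_compat_l s _ _ ltac:(lra) h2).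
assert (e : (1 - s) * ((1 - (1 + c * s)) / (1 + c * s)) + s * ((1 + c - (1 + c * s)) / (1 + c * s)) = 0)
  by (field; lra).
nra.
Qed.

Lemma sumR_le n (f g : nat -> R) : (forall i, (i < n)%N -> f i <= g i) -> sumR n f <= sumR n g.
Proof.
elim: n => [|n IH] h /=; first lra.
apply: Rplus_le_compat; last exact: h.
by apply: IH => i hi; apply: h; apply: ltnW.
Qed.

Lemma sumR_S n (f : nat -> R) : sumR n.+1 f = sumR n f + f n.
Proof. by []. Qed.

Lemma sumR_const n a : sumR n (fun _ => a) = INR n * a.
Proof. elim: n => [|n IH]; first by rewrite /= /INR; ring. rewrite sumR_S IH S_INR; ring. Qed.

Lemma sumR_scal n a (f : nat -> R) : sumR n (fun i => a * f i) = a * sumR n f.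
Proof. elim: n => [|n IH] /=; first ring. rewrite IH; ring. Qed.

Lemma sumR_add n (f g : nat -> R) : sumR n (fun i => f i + g i) = sumR n f + sumR n g.
Proof. elim: n => [|n IH] /=; first ring. rewrite IH; ring. Qed.

Lemma sumR_sub n (f g : nat -> R) : sumR n (fun i => f i - g i) = sumR n f - sumR n g.
Proof. elim: n => [|n IH] /=; first ring. rewrite IH; ring. Qed.

Lemma sumR_ge0 n (f : nat -> R) : (forall i, (i < n)%N -> 0 <= f i) -> 0 <= sumR n f.
Proof.
move=> h; have := sumR_le (f := fun _ => 0) (g := f) h.
by rewrite sumR_const; lra.
Qed.

Lemma sumR_sq_dev n (a : nat -> R) b :
  sumR n (fun i => (a i - b) ^ 2) = sumR n (fun i => a i ^ 2) - 2 * b * sumR n a + INR n * b ^ 2.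
Proof. elim: n => [|n IH]; first by rewrite /= /INR; ring. rewrite !sumR_S IH S_INR; ring. Qed.

Lemma sum_cs n (a : nat -> R) : (sumR n a) ^ 2 <= INR n * sumR n (fun i => a i ^ 2).
Proof.
suff : INR n * sumR n (fun i => a i ^ 2) - (sumR n a) ^ 2 =
   sumR n (fun j => sumR j (fun i => (a i - a j) ^ 2)).
  move=> e; have : 0 <= sumR n (fun j => sumR j (fun i => (a i - a j) ^ 2)).
    apply: sumR_ge0 => j _; apply: sumR_ge0 => i _; apply: pow2_ge_0.
  lra.
elim: n => [|n IH]; first by rewrite /= /INR; ring.
rewrite !sumR_S -IH sumR_sq_dev S_INR; ring.
Qed.

Lemma ln_le a b : 0 < a -> a <= b -> ln a <= ln b.
Proof.
move=> ha hab; case: (Rle_lt_or_eq_dec _ _ hab) => h.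
  by apply: Rlt_le; apply: ln_increasing.
by rewrite h; apply: Rle_refl.
Qed.

Lemma max_val_ge (T : Type) (f : T -> R) (x : nat -> T) n i :
  (i < n)%N -> f (x (S i)) <= max_val f x n.
Proof.
elim: n => [|n IH] // hi /=.
case: (ltnP i n) => h.
  by apply: Rle_trans (IH h) _; apply: Rmax_l.
have -> : i = n by apply/eqP; rewrite eqn_leq h -ltnS hi.
exact: Rmax_r.
Qed.

End Fin.

Open Scope R_scope.

Theorem theorem1
  (d : nat) (Xs : (nat -> R) -> Prop) (HX : compact_Rd d Xs)
  (k : Xt Xs -> Xt Xs -> R) (Hk : pd_kernel k) (Hk1 : forall x, k x x <= 1)
  (H : (Xt Xs -> R) -> Prop) (ip : (Xt Xs -> R) -> (Xt Xs -> R) -> R)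
  (HH : is_RKHS k H ip)
  (f : Xt Xs -> R) (Hf : H f)
  (T : nat) (HT : (le 1 T))
  (x : nat -> Xt Xs)
  (Hinv : forall t, (le 1 t /\ le t T) -> det t (Kmat k x) <> 0)
  (Halg : forall t, (le 1 t /\ le t T) -> forall y : Xt Xs,
      post_mean k x f (Nat.sub t 1) y + rnorm ip f * post_sd k x (Nat.sub t 1) y
      <= post_mean k x f (Nat.sub t 1) (x t) + rnorm ip f * post_sd k x (Nat.sub t 1) (x t))
  (xstar : Xt Xs) (Hxstar : forall y : Xt Xs, f y <= f xstar)
  (sigma : R) (Hsigma : 0 < sigma)
  (gammaT : R) (Hgamma : is_lub (info_set k sigma T) gammaT) :
  let C1 := 8 / ln (1 + / sigma ^ 2) in
  cum_regret f xstar x T <= rnorm ip f * sqrt (INR T * C1 * gammaT) /\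
  simple_regret f xstar x T <= rnorm ip f * sqrt (C1 * gammaT / INR T).
Proof.
move=> C1.
have [c hc] : exists c, c = / sigma ^ 2 by eexists.
have c0 : 0 < c by rewrite hc; apply: Rinv_0_lt_compat; apply: pow_lt.
have B0 : 0 <= rnorm ip f by apply: sqrt_pos.
have hd : forall u, (u < T)%N -> det u (Kmat k x) <> 0.
  case=> [|u] hu; first by rewrite /=; lra.
  apply: Hinv; move/ssrnat.ltP: hu; lia.
have hconf : forall u y, (u < T)%N -> 0 <= post_var k x u y /\ post_var k x u y <= k y y /\
    Rabs (f y - post_mean k x f u y) <= rnorm ip f * post_sd k x u y.
  by move=> u y hu; exact: (@conf _ k H ip HH Hk x f u y Hf (hd u hu)).
pose s := fun u => post_var k x u (x (S u)).
pose sd := fun u => post_sd k x u (x (S u)).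
have step : forall u, (u < T)%N -> f xstar - f (x (S u)) <= 2 * rnorm ip f * sd u.
  move=> u hu.
  have [_ [_ h1]] := hconf u xstar hu.
  have [_ [_ h2]] := hconf u (x (S u)) hu.
  have h3 := Halg u.+1 (conj (le_n_S 0 u (le_0_n u)) (ssrnat.ltP hu)) xstar.
  have e : Nat.sub (S u) 1 = u by lia.
  rewrite e in h3.
  have h1' := Rle_abs (f xstar - post_mean k x f u xstar).
  have h2' := Rle_abs (post_mean k x f u (x (S u)) - f (x (S u))).
  rewrite Rabs_minus_sym in h2'.
  rewrite /sd; lra.
have hR : cum_regret f xstar x T <= 2 * rnorm ip f * sumR T sd.
  rewrite /cum_regret -sumR_scal; apply: sumR_le => i hi; exact: step.
have hs01 : forall u, (u < T)%N -> 0 <= s u <= 1.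
  move=> u hu; have [h1 [h2 _]] := hconf u (x (S u)) hu.
  have h3 := Hk1 (x (S u)); rewrite /s; split; [exact h1 | exact (Rle_trans _ _ _ h2 h3)].
have hdet : forall t, (t <= T)%N -> 0 < det t (IcK k x c) /\
    sumR t (fun u => ln (1 + c * s u)) <= ln (det t (IcK k x c)).
  elim=> [|t IH] ht.
    rewrite /= ln_1; split; lra.
  have [p IHs] := IH (ltnW ht).
  have st : (det t (IcK k x c) * (1 + c * post_var k x t (x (S t))) <= det (t + 1) (IcK k x c))%R.
    apply: det_step => //; [exact/RltP | exact: hd | exact/RltP].
  move/RleP: st; rewrite addn1 => st.
  have hsu := hs01 t ht.
  have cs0 : 0 <= c * s t by apply: Rmult_le_pos; lra.
  have pos1 : 0 < 1 + c * s t by lra.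
  have pp : 0 < det t (IcK k x c) * (1 + c * s t) by apply: Rmult_lt_0_compat.
  have st' : det t (IcK k x c) * (1 + c * s t) <= det t.+1 (IcK k x c) := st.
  split; first exact: Rlt_le_trans pp st'.
  rewrite sumR_S.
  apply: Rle_trans (ln_le pp st').
  rewrite ln_mult //; lra.
have [pT hsumT] := hdet T (leqnn T).
have hub : / 2 * ln (det T (IcK k x c)) <= gammaT.
  apply: (proj1 Hgamma); exists (fun i => x (S i)); rewrite hc; reflexivity.
have lnpos : 0 < ln (1 + c).
  rewrite -ln_1; apply: ln_increasing; lra.
have hconc : sumR T (fun u => ln (1 + c) * s u) <= sumR T (fun u => ln (1 + c * s u)).
  apply: sumR_le => u hu; rewrite Rmult_comm; apply: ln_concave => //; exact: hs01.
rewrite sumR_scal in hconc.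
have sl0 : 0 <= sumR T (fun u => ln (1 + c * s u)).
  apply: sumR_ge0 => u hu; rewrite -ln_1; apply: ln_le; first lra.
  have := hs01 u hu => hh; have : 0 <= c * s u by apply: Rmult_le_pos; lra.
  lra.
have g0 : 0 <= gammaT by lra.
have hsum_s : sumR T s <= 2 * gammaT / ln (1 + c).
  apply: (Rmult_le_reg_l (ln (1 + c))) => //.
  have e : ln (1 + c) * (2 * gammaT / ln (1 + c)) = 2 * gammaT by field; lra.
  rewrite e; lra.
have hsd2 : sumR T (fun i => sd i ^ 2) = sumR T s.
  apply: sumR_ext => i hi; rewrite /sd /s /post_sd pow2_sqrt //.
  by case: (hs01 i hi).
have cs := sum_cs T sd.
rewrite hsd2 in cs.
have sd0 : 0 <= sumR T sd by apply: sumR_ge0 => i _; apply: sqrt_pos.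
have INR0 : 0 < INR T by apply: lt_0_INR; lia.
have hsd : sumR T sd <= sqrt (INR T * (2 * gammaT / ln (1 + c))).
  rewrite -(sqrt_pow2 (sumR T sd)) //; apply: sqrt_le_1_alt.
  apply: Rle_trans cs _; apply: Rmult_le_compat_l; lra.
have X0 : 0 <= INR T * (2 * gammaT / ln (1 + c)).
  apply: Rmult_le_pos; first lra.
  apply: Rmult_le_pos; first lra.
  by apply: Rlt_le; apply: Rinv_0_lt_compat.
have e4 : INR T * C1 * gammaT = 2 ^ 2 * (INR T * (2 * gammaT / ln (1 + c))).
  rewrite /C1 -hc; field; lra.
have hR2 : cum_regret f xstar x T <= rnorm ip f * sqrt (INR T * C1 * gammaT).
  rewrite e4 sqrt_mult_alt; last lra.
  rewrite sqrt_pow2; last lra.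
  apply: Rle_trans hR _.
  have := Rmult_le_compat_l (2 * rnorm ip f) _ _ ltac:(lra) hsd.
  lra.
split => //.
have hsr : INR T * simple_regret f xstar x T <= cum_regret f xstar x T.
  rewrite /simple_regret /cum_regret -sumR_const.
  apply: sumR_le => i hi.
  have := max_val_ge f x hi; lra.
have e5 : INR T * C1 * gammaT = INR T ^ 2 * (C1 * gammaT / INR T).
  field; lra.
rewrite e5 sqrt_mult_alt in hR2; last by apply: pow2_ge_0.
rewrite sqrt_pow2 in hR2; last lra.
apply: (Rmult_le_reg_l (INR T)) => //.
lra.
Qed.
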